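(* Let $S$ be a simple extension of degree $n$ of a field $k$ of characteristic $0$, let $c$ be a primitive element of $S/k$, and let $x\in S$ be non-zero. Let $V_c=\{b\in S^*\mid cb^2\text{ is a primitive element of }S/k\}$. Then the set $W_{c,x}=\{b\in V_c\mid \{xb^{-1},cb^2\}\neq 0\}$ is non-empty and open in $S^*$.
   Context: A $k$-algebra $S$ is a simple extension of degree $n$ of the field $k$ if there is $c\in S^*$ (a primitive element) such that $1,c,\dots,c^{n-1}$ is a $k$-basis of $S$. For a primitive element $d$ and $y\in S$, $\{y,d\}$ denotes the coefficient $y_{n-1}$ in the unique expression $y=\sum_{i=0}^{n-1}y_i d^i$ with $y_i\in k$. $S$ is identified with $\mathbb{A}^n(k)$ via a $k$-basis and given the Zariski topology; $S^*$ carries the subspace topology. *)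

(* Defs.v *)
From HB Require Import structures.
From mathcomp Require Import all_boot all_order all_algebra all_field.
From mathcomp Require Import mpoly.
Set Implicit Arguments. Unset Strict Implicit. Unset Printing Implicit Defensive.
Import GRing.Theory.
Local Open Scope ring_scope.

Section Defs.
Variables (k : fieldType) (S : falgType k).

Definition deg : nat := \dim {:S}.

Definition pow_tuple (d : S) : deg.-tuple S := [tuple d ^+ i | i < deg].

Definition primitive (d : S) : bool :=
  (d \is a GRing.unit) && basis_of fullv (pow_tuple d).

(* {y, d} : the coefficient y_(n-1) of y in the basis 1, d, ..., d^(n-1) *)
Definition topcoef (y d : S) : k :=
  \sum_(i < deg | i.+1 == deg) coord (pow_tuple d) i y.

(* coordinates of x in a fixed k-basis of S: identifies S with A^n(k) *)
Definition coords (x : S) : 'I_deg -> k := fun i => coord (vbasis {:S}) i x.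

Definition zariski_closed (A : S -> Prop) : Prop :=
  exists P : {mpoly k[deg]} -> Prop,
    forall x, A x <-> (forall p, P p -> p.@[coords x] = 0).

Definition zariski_open (U : S -> Prop) : Prop :=
  zariski_closed (fun x => ~ U x).

Definition open_in_units (W : S -> Prop) : Prop :=
  (forall b, W b -> b \is a GRing.unit) /\
  exists U, zariski_open U /\ forall b, b \is a GRing.unit -> (W b <-> U b).

Definition Vset (c : S) (b : S) : Prop :=
  b \is a GRing.unit /\ primitive (c * b ^+ 2).

Definition Wset (c x : S) (b : S) : Prop :=
  Vset c b /\ topcoef (x * b^-1) (c * b ^+ 2) != 0.

End Defs.

(* Main.v *)
Require Import Defs.
From HB Require Import structures.
From mathcomp Require Import all_boot all_order all_algebra all_field.
From mathcomp Require Import mpoly.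
From mathcomp Require Import perm.
From mathcomp Require Import zify.
Set Implicit Arguments. Unset Strict Implicit. Unset Printing Implicit Defensive.
Import GRing.Theory.
Local Open Scope ring_scope.

Section Closure.
Variables (A : Type) (R : comNzRingType) (P : (A -> R) -> Prop).
Hypothesis P_ext : forall f g, (forall a, f a = g a) -> P f -> P g.
Hypothesis P_const : forall r, P (fun _ => r).
Hypothesis P_add : forall f g, P f -> P g -> P (fun a => f a + g a).
Hypothesis P_mul : forall f g, P f -> P g -> P (fun a => f a * g a).

Lemma P_sum (I : Type) (r : seq I) (F : I -> A -> R) :
  (forall i, P (F i)) -> P (fun a => \sum_(i <- r) F i a).
Proof.
move=> HF; elim: r => [|i r IH].
  by apply: P_ext (P_const 0) => a; rewrite big_nil.
by apply: P_ext (P_add (HF i) IH) => a; rewrite big_cons.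
Qed.

Lemma P_prod (I : Type) (r : seq I) (F : I -> A -> R) :
  (forall i, P (F i)) -> P (fun a => \prod_(i <- r) F i a).
Proof.
move=> HF; elim: r => [|i r IH].
  by apply: P_ext (P_const 1) => a; rewrite big_nil.
by apply: P_ext (P_mul (HF i) IH) => a; rewrite big_cons.
Qed.

Lemma P_det m (F : 'I_m -> 'I_m -> A -> R) :
  (forall i j, P (F i j)) -> P (fun a => \det (\matrix_(i, j) F i j a)).
Proof.
move=> HF.
apply: P_ext (P_sum (I := 'S_m) (index_enum _) (F := fun (s : 'S_m) a => (-1) ^+ s * \prod_(i <- index_enum _) F i (s i) a) _) => [a|s].
  by rewrite /determinant; apply: eq_bigr => s _; congr (_ * _); apply: eq_bigr => i _; rewrite mxE.
apply: P_mul => //; exact: P_prod.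
Qed.
End Closure.

Section LinAlg.
Variables (k : fieldType) (S : falgType k).
Local Notation n := (deg S).

Definition tup (V : 'I_n -> S) : n.-tuple S := [tuple V i | i < n].

Lemma nth_tup V (i : 'I_n) : (tup V)`_i = V i.
Proof. by rewrite /tup nth_mktuple. Qed.

Lemma free_tupP V : reflect (forall b : 'I_n -> k, \sum_i b i *: V i = 0 -> forall i, b i = 0) (free (tup V)).
Proof.
apply: (iffP freeP) => H b Hb.
  by apply: H; apply: etrans Hb; apply: eq_bigr => i _; rewrite nth_tup.
by apply: H; apply: etrans Hb; apply: eq_bigr => i _; rewrite nth_tup.
Qed.

Lemma eq_tup V W : V =1 W -> tup V = tup W.
Proof. by move=> H; apply: eq_mktuple. Qed.

Lemma basis_full V : basis_of fullv (tup V) = free (tup V).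
Proof. by rewrite basisEfree subvf size_tuple leqnn !andbT. Qed.

Lemma free_expand V : free (tup V) -> forall v, v = \sum_i coord (tup V) i v *: V i.
Proof.
move=> fV v; rewrite {1}(@coord_basis _ _ fullv _ (tup V) v) ?basis_full ?memvf //.
by apply: eq_bigr => i _; rewrite nth_tup.
Qed.

Lemma coords_expand v : v = \sum_(j < n) coords v j *: (vbasis fullv)`_j.
Proof. exact: (coord_vbasis (memvf v)). Qed.

Definition coordmat (V : 'I_n -> S) : 'M[k]_n := \matrix_(i, j) coords (V i) j.

Lemma free_det V : free (tup V) = (\det (coordmat V) != 0).
Proof.
apply/idP/idP => [fV | dV].
  pose N : 'M[k]_n := \matrix_(j, l) coord (tup V) l (vbasis fullv)`_j.
  have MN : coordmat V *m N = 1%:M.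
    apply/matrixP => i l; rewrite !mxE.
    rewrite (eq_bigr (fun j => coord (tup V) l (coords (V i) j *: (vbasis fullv)`_j))); last first.
      by move=> j _; rewrite !mxE linearZ.
    by rewrite -linear_sum -coords_expand; have := coord_free i l fV; rewrite nth_tup.
  have [Mu _] := mulmx1_unit MN.
  by rewrite -unitfE -unitmxE.
apply/free_tupP => b Hb.
have Mu : coordmat V \in unitmx by rewrite unitmxE unitfE.
have r0 : \row_i b i *m coordmat V = 0.
  apply/rowP => j; rewrite !mxE.
  rewrite (eq_bigr (fun i => coords (b i *: V i) j)); last first.
    by move=> i _; rewrite !mxE /coords linearZ.
  by rewrite /coords -linear_sum Hb linear0.
move=> i; have := congr1 (fun r => r *m invmx (coordmat V)) r0.
by rewrite mulmxK // mul0mx => /rowP /(_ i); rewrite !mxE.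
Qed.

Lemma rep_free (T T' : 'I_n -> S) l0 (s : k) (a : 'I_n -> k) :
  s != 0 -> a l0 = 0 -> (forall i, i != l0 -> T' i = T i) ->
  T' l0 = s *: T l0 + \sum_i a i *: T i -> free (tup T) -> free (tup T').
Proof.
move=> s0 a0 HT' Hl /free_tupP fT; apply/free_tupP => b Hb.
pose b' i := (if i == l0 then b l0 * s else b i) + b l0 * a i.
have E1 : \sum_i b i *: T' i = b l0 *: (s *: T l0 + \sum_i a i *: T i) + \sum_(i | i != l0) b i *: T i.
  rewrite (bigD1 l0) //= Hl; congr (_ + _); apply: eq_bigr => j Hj; by rewrite HT'.
have E2 : \sum_i b' i *: T i = b l0 *: (s *: T l0 + \sum_i a i *: T i) + \sum_(i | i != l0) b i *: T i.
  rewrite /b'; under eq_bigr do rewrite scalerDl.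
  rewrite big_split /= (bigD1 l0) //= eqxx.
  rewrite [in X in _ + X + _](eq_bigr (fun i => b i *: T i)); last by move=> i /negbTE ->.
  by rewrite scalerDr scalerA scaler_sumr addrAC; congr (_ + _ + _); apply: eq_bigr => i _; rewrite scalerA.
have := fT b'; rewrite E2 -E1 Hb => /(_ erefl) hb'.
have bl0 : b l0 = 0.
  by have := hb' l0; rewrite /b' eqxx a0 mulr0 addr0 => /eqP; rewrite mulf_eq0 (negbTE s0) orbF => /eqP.
move=> i; have := hb' i; rewrite /b' bl0 !mul0r addr0; case: eqP => [-> _|//]; exact: bl0.
Qed.

Lemma unit_mul_free (u : S) V : u \is a GRing.unit -> free (tup (fun i => u * V i)) = free (tup V).
Proof.
have H : forall (u : S) V, u \is a GRing.unit -> free (tup V) -> free (tup (fun i => u * V i)).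
  move=> u' V' uu /free_tupP fV; apply/free_tupP => b Hb; apply: fV.
  have : u'^-1 * \sum_i b i *: (u' * V' i) = 0 by rewrite Hb mulr0.
  rewrite mulr_sumr; under eq_bigr do rewrite -scalerAr mulKr //.
  done.
move=> uu; apply/idP/idP; last exact: H.
move=> /(H (u^-1)); rewrite unitrV => /(_ uu).
suff -> : tup (fun i => u^-1 * (u * V i)) = tup V by []. by apply: eq_mktuple => i; rewrite mulKr.
Qed.

Lemma n_gt0 : (0 < n)%N.
Proof.
rewrite lt0n /deg dimv_eq0; apply/negP => /eqP H.
by have := memvf (1 : S); rewrite H memv0 oner_eq0.
Qed.

Lemma lst_lt : (n.-1 < n)%N.
Proof. by rewrite ltn_predL n_gt0. Qed.

Definition lst : 'I_n := Ordinal lst_lt.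

Lemma lstE (i : 'I_n) : (i.+1 == n) = (i == lst).
Proof.
rewrite /lst -(inj_eq val_inj) /=; move: (nat_of_ord i) => m.
by rewrite -{1}(prednK n_gt0) eqSS.
Qed.

Lemma topcoefE y d : topcoef y d = coord (tup (fun i => d ^+ i)) lst y.
Proof. by rewrite /topcoef (big_pred1 lst) // => i; rewrite /= lstE. Qed.

Lemma lemC d y : free (tup (fun i => d ^+ i)) ->
  free (tup (fun i => if i == lst then y else d ^+ i)) = (topcoef y d != 0).
Proof.
move=> fd; rewrite topcoefE.
set X := tup (fun i => d ^+ i).
have Ey := free_expand fd y.
have Ey' : y = coord X lst y *: d ^+ lst + \sum_(i | i != lst) coord X i y *: d ^+ i.
  by rewrite {1}Ey (bigD1 lst).
apply/idP/idP => [ff | yl].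
  apply/negP => /eqP yl0; move/free_tupP: ff => /(_ (fun i => if i == lst then -1 else coord X i y)).
  have : \sum_i (if i == lst then -1 else coord X i y) *:
              (if i == lst then y else d ^+ i) = 0.
    rewrite (bigD1 lst) //= eqxx scaleN1r.
    rewrite (eq_bigr (fun i => coord X i y *: d ^+ i)); last by move=> i /negbTE ->.
    by rewrite {1}Ey' yl0 scale0r add0r addNr.
  move=> H /(_ H lst); rewrite eqxx => /eqP; by rewrite oppr_eq0 oner_eq0.
apply: (rep_free (T := fun i => d ^+ i) (l0 := lst) (s := coord X lst y)
   (a := fun i => if i == lst then 0 else coord X i y)) => //.
- by rewrite eqxx.
- by move=> i /negbTE ->.
rewrite eqxx {1}Ey'; congr (_ + _).
rewrite [RHS](bigD1 lst) //= eqxx scale0r add0r.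
by apply: eq_bigr => i /negbTE ->.
Qed.

Lemma comm_all (c : S) : free (tup (fun i => c ^+ i)) -> forall u w : S, u * w = w * u.
Proof.
move=> fc.
have cc : forall u : S, GRing.comm c u.
  move=> u; rewrite /GRing.comm (free_expand fc u) mulr_sumr mulr_suml.
  apply: eq_bigr => i _; rewrite -scalerAr -scalerAl; congr (_ *: _).
  by rewrite -exprS -exprSr.
move=> u w; rewrite (free_expand fc w) mulr_sumr mulr_suml.
apply: eq_bigr => i _; rewrite -scalerAr -scalerAl; congr (_ *: _).
by apply: commrX; rewrite /GRing.comm cc.
Qed.
End LinAlg.
Arguments lst {k S}.

Section Classes.
Variables (k : fieldType) (S : falgType k).
Local Notation n := (deg S).

Definition MPf (g : S -> k) := exists p : {mpoly k[n]}, forall b, g b = p.@[coords b].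
Definition PM (V : S -> S) := forall j, MPf (fun b => coords (V b) j).

Lemma MPf_ext f g : (forall a, f a = g a) -> MPf f -> MPf g.
Proof. by move=> E [p Hp]; exists p => b; rewrite -E. Qed.
Lemma MPf_const r : MPf (fun _ => r).
Proof. by exists r%:MP => b; rewrite mevalC. Qed.
Lemma MPf_add f g : MPf f -> MPf g -> MPf (fun a => f a + g a).
Proof. by move=> [p Hp] [q Hq]; exists (p + q) => b; rewrite mevalD Hp Hq. Qed.
Lemma MPf_mul f g : MPf f -> MPf g -> MPf (fun a => f a * g a).
Proof. by move=> [p Hp] [q Hq]; exists (p * q) => b; rewrite mevalM Hp Hq. Qed.

Lemma coordsD (u w : S) j : coords (u + w) j = coords u j + coords w j.
Proof. by rewrite /coords linearD. Qed.
Lemma coordsZ a (u : S) j : coords (a *: u) j = a * coords u j.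
Proof. by rewrite /coords linearZ. Qed.
Lemma coords_sum (I : Type) (r : seq I) (F : I -> S) j :
  coords (\sum_(i <- r) F i) j = \sum_(i <- r) coords (F i) j.
Proof. by rewrite /coords linear_sum. Qed.

Lemma coords_mul (u w : S) j : coords (u * w) j =
  \sum_(l < n) \sum_(m < n) (coords u l * coords w m * coords ((vbasis fullv)`_l * (vbasis fullv)`_m) j).
Proof.
rewrite {1}(coords_expand u) {1}(coords_expand w) mulr_suml coords_sum.
apply: eq_bigr => l _; rewrite mulr_sumr coords_sum; apply: eq_bigr => m _.
by rewrite -scalerAl -scalerAr !coordsZ mulrA.
Qed.

Lemma PM_id : PM id.
Proof. by move=> j; exists 'X_j => b; rewrite mevalXU. Qed.
Lemma PM_const v : PM (fun _ => v).
Proof. by move=> j; exact: MPf_const. Qed.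
Lemma PM_add V W : PM V -> PM W -> PM (fun b => V b + W b).
Proof. by move=> HV HW j; apply: MPf_ext (MPf_add (HV j) (HW j)) => b; rewrite coordsD. Qed.
Lemma PM_mul V W : PM V -> PM W -> PM (fun b => V b * W b).
Proof.
move=> HV HW j; apply: MPf_ext; first by move=> b; rewrite coords_mul.
apply: (P_sum MPf_ext MPf_const MPf_add) => l.
apply: (P_sum MPf_ext MPf_const MPf_add) => m.
by apply: MPf_mul; [apply: MPf_mul|apply: MPf_const].
Qed.
Lemma PM_exp V m : PM V -> PM (fun b => V b ^+ m).
Proof.
move=> HV; elim: m => [|m IH].
  by move=> j; apply: MPf_ext (PM_const 1 j) => b; rewrite expr0.
by move=> j; apply: MPf_ext (PM_mul HV IH j) => b; rewrite exprS.
Qed.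

Lemma MPf_det (V : 'I_n -> S -> S) : (forall i, PM (V i)) ->
  MPf (fun b => \det (coordmat (fun i => V i b))).
Proof.
move=> HV; apply: (P_det MPf_ext MPf_const MPf_add MPf_mul (F := fun i j b => coords (V i b) j)).
by move=> i j; exact: HV.
Qed.

Definition PF (g : k -> k) := exists q : {poly k}, forall s, g s = q.[s].
Definition PP (R : k -> S) := exists P : {poly S}, forall s, R s = P.[s%:A].

Lemma PF_ext f g : (forall a, f a = g a) -> PF f -> PF g.
Proof. by move=> E [p Hp]; exists p => b; rewrite -E. Qed.
Lemma PF_const r : PF (fun _ => r).
Proof. by exists r%:P => b; rewrite hornerC. Qed.
Lemma PF_add f g : PF f -> PF g -> PF (fun a => f a + g a).
Proof. by move=> [p Hp] [q Hq]; exists (p + q) => b; rewrite hornerD Hp Hq. Qed.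
Lemma PF_mul f g : PF f -> PF g -> PF (fun a => f a * g a).
Proof. by move=> [p Hp] [q Hq]; exists (p * q) => b; rewrite hornerM Hp Hq. Qed.

Lemma PP_ext f g : (forall a, f a = g a) -> PP f -> PP g.
Proof. by move=> E [p Hp]; exists p => b; rewrite -E. Qed.
Lemma PP_const v : PP (fun _ => v).
Proof. by exists v%:P => b; rewrite hornerC. Qed.
Lemma PP_X : PP (fun s => s%:A).
Proof. by exists 'X => b; rewrite hornerX. Qed.
Lemma PP_add f g : PP f -> PP g -> PP (fun a => f a + g a).
Proof. by move=> [p Hp] [q Hq]; exists (p + q) => b; rewrite hornerD Hp Hq. Qed.
Lemma PP_mul f g : PP f -> PP g -> PP (fun a => f a * g a).
Proof.
move=> [p Hp] [q Hq]; exists (p * q) => b; rewrite hornerM_comm ?Hp ?Hq //.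
by rewrite /comm_poly mulr_algl mulr_algr.
Qed.
Lemma PP_scale a f : PP f -> PP (fun s => a *: f s).
Proof. by move=> Hf; apply: PP_ext (PP_mul (PP_const a%:A) Hf) => s; rewrite mulr_algl. Qed.
Lemma PP_exp f m : PP f -> PP (fun b => f b ^+ m).
Proof.
move=> Hf; elim: m => [|m IH].
  by apply: PP_ext (PP_const 1) => b; rewrite expr0.
by apply: PP_ext (PP_mul Hf IH) => b; rewrite exprS.
Qed.
Lemma PP_sum (I : Type) (r : seq I) (F : I -> k -> S) :
  (forall i, PP (F i)) -> PP (fun a => \sum_(i <- r) F i a).
Proof.
move=> HF; elim: r => [|i r IH].
  by apply: PP_ext (PP_const 0) => a; rewrite big_nil.
by apply: PP_ext (PP_add (HF i) IH) => a; rewrite big_cons.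
Qed.

Lemma coords_horner (P : {poly S}) s j :
  coords (P.[s%:A]) j = (map_poly (fun u : S => coords u j) P).[s].
Proof.
rewrite horner_coef /map_poly horner_poly coords_sum; apply: eq_bigr => i _.
by rewrite exprZn expr1n mulr_algr coordsZ mulrC.
Qed.

Lemma PF_det (R : 'I_n -> k -> S) : (forall i, PP (R i)) ->
  PF (fun s => \det (coordmat (fun i => R i s))).
Proof.
move=> HR; apply: (P_det PF_ext PF_const PF_add PF_mul (F := fun i j s => coords (R i s) j)).
move=> i j; have [P HP] := HR i; exists (map_poly (fun u : S => coords u j) P) => s.
by rewrite HP coords_horner.
Qed.
End Classes.

Section Main.
Variables (k : fieldType) (S : falgType k).
Local Notation n := (deg S).

Lemma pow_tupE (d : S) : pow_tuple d = tup (fun i => d ^+ i).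
Proof. by []. Qed.

Lemma W_char (c x b : S) : primitive c -> b \is a GRing.unit ->
  (Wset c x b <-> free (tup (fun i => (c * b ^+ 2) ^+ i)) /\
     free (tup (fun i => if i == lst then x else b * (c * b ^+ 2) ^+ i))).
Proof.
move=> /andP[cu cb] bu.
have fc : free (tup (fun i => c ^+ i)) by rewrite -basis_full.
have cm := comm_all fc.
have du : c * b ^+ 2 \is a GRing.unit by rewrite unitrMl ?unitrX.
have key : free (tup (fun i => (c * b ^+ 2) ^+ i)) ->
   (topcoef (x * b^-1) (c * b ^+ 2) != 0) =
   free (tup (fun i => if i == lst then x else b * (c * b ^+ 2) ^+ i)).
  move=> fd; rewrite -lemC // -(unit_mul_free _ bu).
  suff -> : tup (fun i => b * (if i == lst then x * b^-1 else (c * b ^+ 2) ^+ i)) =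
    tup (fun i => if i == lst then x else b * (c * b ^+ 2) ^+ i) by [].
  apply: eq_tup => i; case: (i == lst) => //.
  by rewrite mulrA (cm b x) mulrK.
rewrite /Wset /Vset /primitive du bu pow_tupE basis_full /=.
split => [[[_ fd] tc] | [fd ff]]; first by split => //; rewrite -key.
by split => //; rewrite key.
Qed.

Lemma tup_nth (X : n.-tuple S) : tup (fun i => X`_i) = X.
Proof. by apply: eq_from_tnth => i; rewrite tnth_mktuple (tnth_nth 0). Qed.

Lemma exists_nonroot (char0 : [pchar k] =i pred0) (q : {poly k}) :
  q != 0 -> exists s, q.[s] != 0.
Proof.
move=> q0.
have h : forall i j, (i <= j)%N -> i%:R = j%:R :> k -> i = j.
  move=> i j le E; apply/eqP; rewrite eqn_leq le /= -subn_eq0.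
  by rewrite -((pcharf0P _).1 char0) natrB // E subrr.
have inj : injective (fun i : nat => i%:R : k).
  move=> i j /= E; case: (leqP i j) => [le|/ltnW le]; first exact: h.
  by apply/esym/h.
pose rs := [seq i%:R : k | i <- iota 0 (size q)].
case: (boolP (all (root q) rs)) => [Hall | /allPn [s _ Hs]]; last by exists s.
have := max_poly_roots q0 Hall; rewrite map_inj_uniq ?iota_uniq // => /(_ erefl).
by rewrite size_map size_iota ltnn.
Qed.

Lemma nondeg (c z : S) (fc : free (tup (fun i => c ^+ i))) (j : 'I_n) :
  coord (tup (fun i => c ^+ i)) j z != 0 -> exists e, topcoef (z * e) c != 0.
Proof.
set X := tup (fun i => c ^+ i) => hz.
have [r Pr maxr] := @arg_maxnP _ j (fun i => coord X i z != 0) (fun i => nat_of_ord i) hz.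
exists (c ^+ (n.-1 - r)).
rewrite topcoefE -/X (free_expand fc z) mulr_suml.
rewrite (eq_bigr (fun i => coord X i z *: c ^+ (i + (n.-1 - r)))); last first.
  by move=> i _; rewrite -scalerAl exprD.
have rn : (r <= n.-1)%N by have := ltn_ord r; have := n_gt0 S; lia.
rewrite linear_sum (bigD1 r) //= big1 ?addr0.
  rewrite linearZ /= subnKC //.
  have -> : c ^+ n.-1 = X`_(@lst _ S) by rewrite /X nth_tup.
  by rewrite coord_free // eqxx mulr1.
move=> i ir; rewrite linearZ /=; case: (eqVneq (coord X i z) 0) => [->|nz]; first by rewrite mul0r.
have ler : (i <= r)%N := maxr i nz.
have lt : (i + (n.-1 - r) < n)%N.
  have := ltn_ord r; have := n_gt0 S; move: ir; rewrite -(inj_eq val_inj) /=; lia.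
have -> : c ^+ (i + (n.-1 - r)) = X`_(Ordinal lt) by rewrite /X nth_tup.
rewrite coord_free //; case: eqP => [/(congr1 val) /= E|_]; last by rewrite mulr0.
by move: ir; rewrite -(inj_eq val_inj) /=; move: E ler rn; lia.
Qed.
End Main.

Unset Implicit Arguments.

Theorem lemma3p7 (k : fieldType) (S : falgType k)
  (char0 : [pchar k] =i pred0)
  (c : S) (hc : primitive c) (x : S) (hx : x != 0) :
  (exists b, Wset c x b) /\ open_in_units (Wset c x).
Proof.
have fc : free (tup (fun i => c ^+ i)) by case/andP: hc => _; rewrite pow_tupE basis_full.
have cm := comm_all fc.
split; last first.
  split; first by move=> b [[bu _] _].
  have [f Hf] : MPf (fun b : S => \det (coordmat (fun i => (c * b ^+ 2) ^+ i)) *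
      \det (coordmat (fun i => if i == lst then x else b * (c * b ^+ 2) ^+ i))).
    apply: MPf_mul.
      apply: (MPf_det (V := fun i b => (c * b ^+ 2) ^+ i)) => i.
      apply: (PM_exp (V := fun b => c * b ^+ 2)); apply: PM_mul; first exact: PM_const.
      exact: (PM_exp (V := id)) (@PM_id _ _).
    apply: (MPf_det (V := fun i b => if i == lst then x else b * (c * b ^+ 2) ^+ i)) => i.
    case: (i == lst); first exact: PM_const.
    apply: (PM_mul (V := id)); first exact: PM_id.
    apply: (PM_exp (V := fun b => c * b ^+ 2)); apply: PM_mul; first exact: PM_const.
    exact: (PM_exp (V := id)) (@PM_id _ _).
  exists (fun b => f.@[coords b] != 0); split.
    exists (fun p => p = f) => b; split.
      by move/negP; rewrite negbK => /eqP H p ->.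
    by move=> H; apply/negP; rewrite negbK; apply/eqP; apply: H.
  move=> b bu; rewrite (W_char _ hc bu) -Hf mulf_eq0 negb_or -!free_det.
  by split => [[-> ->] | /andP[-> ->]].
case: (eqVneq (topcoef x c) 0) => [tc0|tc]; last first.
  exists 1; rewrite /Wset /Vset unitr1 expr1n mulr1 invr1 mulr1.
  by split.
set X := tup (fun i => c ^+ i).
pose p i := coord X i x.
have Ex : x = \sum_i p i *: c ^+ i := free_expand fc x.
have pl : p lst = 0 by rewrite /p -topcoefE.
have [j pj] : exists j, p j != 0.
  case: (pickP (fun j => p j != 0)) => [j pj|H]; first by exists j.
  exfalso; move/eqP: hx; apply; rewrite Ex big1 // => i _.
  by have := H i; move/negbFE/eqP ->; rewrite scale0r.
pose z := \sum_(i < deg S) ((2 * i + 1)%:R * p i) *: c ^+ i.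
have zj : coord X j z != 0.
  have -> : z = \sum_(i < deg S) ((2 * i + 1)%:R * p i) *: X`_i.
    by apply: eq_bigr => i _; rewrite /X nth_tup.
  by rewrite coord_sum_free // mulf_neq0 // ((pcharf0P _).1 char0) addn1.
have [e he] := nondeg fc zj.
pose B := fun s : k => 1 + s *: e.
pose R1 := fun (i : 'I_(deg S)) s => B s * (vbasis fullv)`_i.
pose R2 := fun (i : 'I_(deg S)) s => (c * B s ^+ 2) ^+ i.
pose U := fun (i : 'I_(deg S)) s => c ^+ i * e * \sum_(m < (2 * i + 1)) B s ^+ m.
pose Y := fun s => - \sum_i p i *: U i s.
pose R3 := fun (i : 'I_(deg S)) s => if i == lst then Y s else B s * (c * B s ^+ 2) ^+ i.
have PB : PP B.
  apply: PP_add; first exact: PP_const.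
  by apply: PP_ext (PP_mul (@PP_X _ S) (PP_const e)) => s; rewrite mulr_algl.
have PU : forall i, PP (U i).
  move=> i; apply: PP_mul; first exact: PP_const.
  by apply: PP_sum => m; apply: PP_exp.
have [q1 Hq1] := PF_det (R := R1) (fun i => PP_mul PB (PP_const _)).
have [q2 Hq2] := PF_det (R := R2) (fun i => PP_exp i (PP_mul (PP_const c) (PP_exp 2 PB))).
have PR3 : forall i, PP (R3 i).
  move=> i; rewrite /R3; case: (i == lst).
    apply: PP_ext (PP_scale (-1) (PP_sum (index_enum _) (fun i => PP_scale (p i) (PU i)))).
    by move=> s; rewrite scaleN1r.
  exact: PP_mul PB (PP_exp i (PP_mul (PP_const c) (PP_exp 2 PB))).
have [q3 Hq3] := PF_det PR3.
have B0 : B 0 = 1 by rewrite /B scale0r addr0.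
have Y0 : Y 0 = - (z * e).
  rewrite /Y /z mulr_suml; congr (- _); apply: eq_bigr => i _.
  rewrite /U B0; under eq_bigr do rewrite expr1n.
  by rewrite sumr_const card_ord mulr_natr -scaler_nat scalerA -scalerAl mulrC.
have nz : forall q : {poly k}, q.[0] != 0 -> q != 0.
  by move=> q; apply: contraNneq => ->; rewrite horner0.
have q1n : q1 != 0.
  apply: nz; rewrite -Hq1 -free_det.
  suff -> : tup (fun i => R1 i 0) = vbasis fullv by exact: basis_free (vbasisP _).
  by rewrite -[RHS]tup_nth; apply: eq_tup => i; rewrite /R1 B0 mul1r.
have q2n : q2 != 0.
  apply: nz; rewrite -Hq2 -free_det.
  suff -> : tup (fun i => R2 i 0) = X by [].
  by apply: eq_tup => i; rewrite /R2 B0 expr1n mulr1.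
have q3n : q3 != 0.
  apply: nz; rewrite -Hq3 -free_det.
  suff -> : tup (fun i => R3 i 0) = tup (fun i => if i == lst then Y 0 else c ^+ i).
    by rewrite lemC // Y0 topcoefE linearN /= oppr_eq0 -topcoefE.
  by apply: eq_tup => i; rewrite /R3 B0 expr1n mulr1 mul1r.
have Qn : 'X * q1 * q2 * q3 != 0 by rewrite !mulf_neq0 ?polyX_eq0.
have [s Hs] := exists_nonroot char0 Qn.
rewrite !hornerM hornerX in Hs.
have s0 : s != 0 by apply: contraNneq Hs => ->; rewrite !mul0r.
have h1 : q1.[s] != 0 by apply: contraNneq Hs => ->; rewrite mulr0 !mul0r.
have h2 : q2.[s] != 0 by apply: contraNneq Hs => ->; rewrite mulr0 !mul0r.
have h3 : q3.[s] != 0 by apply: contraNneq Hs => ->; rewrite mulr0.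
exists (B s).
have free1 : free (tup (fun i => R1 i s)) by rewrite free_det Hq1.
have bu : B s \is a GRing.unit.
  have E1 := free_expand free1 1.
  pose w : S := \sum_i coord (tup (fun i => R1 i s)) i 1 *: (vbasis fullv)`_i.
  have Ew : 1 = B s * w.
    rewrite /w mulr_sumr {1}E1; apply: eq_bigr => i _; rewrite /R1 scalerAr //.
  by apply/unitrP; exists w; rewrite (cm w) -Ew.
apply/(W_char _ hc bu); split.
  by have := h2; rewrite -Hq2 -free_det.
have free3 : free (tup (fun i => R3 i s)) by rewrite free_det Hq3.
have ident : forall i : 'I_(deg S), B s * (c * B s ^+ 2) ^+ i = c ^+ i + s *: U i s.
  move=> i; rewrite exprMn_comm; last exact: cm.
  rewrite -exprM mulrA (cm (B s) (c ^+ i)) -mulrA -exprS.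
  have : B s ^+ (2 * i).+1 - 1 = (s *: e) * \sum_(m < (2 * i + 1)) B s ^+ m.
    by rewrite subrX1 addn1 /B addrC addKr.
  move/eqP; rewrite subr_eq => /eqP ->.
  by rewrite /U mulrDr mulr1 addrC scalerAl scalerAr mulrA.
apply: (rep_free (T := fun i => R3 i s) (l0 := lst) (s := s) (a := p)) => //.
- by move=> i /negbTE Hi; rewrite /R3 Hi.
rewrite eqxx /R3 eqxx.
rewrite (eq_bigr (fun i => p i *: c ^+ i + s *: (p i *: U i s))); last first.
  move=> i _; case: eqP => [->|_]; first by rewrite pl !scale0r scaler0 addr0.
  by rewrite ident scalerDr !scalerA mulrC.
rewrite big_split /= -Ex -scaler_sumr /Y scalerN addrCA.
by rewrite [X in x + X]addrC subrr addr0.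
Qed.
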